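(* Let $P=\Bbbk[x_1,x_2,x_3]$ with Poisson bracket $\{x_1,x_2\}=x_1x_2$, $\{x_2,x_3\}=3x_1^2+2x_1x_2+x_2x_3$, $\{x_3,x_1\}=x_1^2+x_1x_3$. If $G$ is a nontrivial finite subgroup of $\mathrm{PAut}_{\mathrm{gr}}(P)$ generated by Poisson reflections, then $P^G$ is not isomorphic to $P$ as Poisson algebras.
   Context: $\Bbbk$ is algebraically closed of characteristic $0$; $P$ has the standard grading. $\mathrm{PAut}_{\mathrm{gr}}(P)$ is the group of degree-preserving bijective algebra homomorphisms preserving the bracket. A Poisson reflection is a finite-order $\phi\in\mathrm{PAut}_{\mathrm{gr}}(P)$ such that $\phi|_{P_1}$ has eigenvalues $1,1,\xi$ with $\xi\neq1$ a primitive root of unity. $P^G$ is the subalgebra of $G$-invariants with the restricted bracket. *)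

(* Defs.v *)
From HB Require Import structures.
From mathcomp Require Import all_boot all_order all_algebra.
From mathcomp Require Import mpoly.
From Stdlib Require List.
Set Implicit Arguments. Unset Strict Implicit. Unset Printing Implicit Defensive.
Import GRing.Theory.
Local Open Scope ring_scope.

Section Poisson.
Variable K : fieldType.

(* P = K[x1,x2,x3]; the variables x1,x2,x3 are 'X_0, 'X_1, 'X_2. *)
Definition Pvar (i : nat) : {mpoly K[3]} := 'X_(inord i).

Definition b12 : {mpoly K[3]} := Pvar 0 * Pvar 1.
Definition b23 : {mpoly K[3]} :=
  3%:R * Pvar 0 ^+ 2 + 2%:R * Pvar 0 * Pvar 1 + Pvar 1 * Pvar 2.
Definition b31 : {mpoly K[3]} := Pvar 0 ^+ 2 + Pvar 0 * Pvar 2.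

Definition gbr (i j : 'I_3) : {mpoly K[3]} :=
  match nat_of_ord i, nat_of_ord j with
  | 0, 1 => b12 | 1, 0 => - b12
  | 1, 2 => b23 | 2, 1 => - b23
  | 2, 0 => b31 | 0, 2 => - b31
  | _, _ => 0
  end.

(* the Poisson bracket on P: the unique biderivation extending gbr *)
Definition pbr (f g : {mpoly K[3]}) : {mpoly K[3]} :=
  \sum_(i < 3) \sum_(j < 3) (mderiv i f * mderiv j g) * gbr i j.

Definition endo := {mpoly K[3]} -> {mpoly K[3]}.

Definition is_PAut_gr (phi : endo) : Prop :=
  (forall f g, phi (f + g) = phi f + phi g)/\
      (forall f g, phi (f * g) = phi f * phi g)/\
      phi 1 = 1/\
      (forall (c : K) f, phi (c *: f) = c *: phi f)/\
      bijective phi/\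
      (forall (d : nat) f, f \is ishomog1 d mdeg -> phi f \is ishomog1 d mdeg)
    /\ (forall f g, phi (pbr f g) = pbr (phi f) (phi g)).

(* matrix of phi restricted to P_1 in the basis x1,x2,x3
   (row i = coordinates of phi(x_i)) *)
Definition mx_P1 (phi : endo) : 'M[K]_3 :=
  \matrix_(i < 3, j < 3) (phi 'X_i)@_(U_(j))%MM.

Definition is_Poisson_reflection (phi : endo) : Prop :=
  [/\ is_PAut_gr phi,
      (exists2 n : nat, (0 < n)%N & forall f, iter n phi f = f)
    & exists xi : K, [/\ xi != 1,
        (exists2 m : nat, (0 < m)%N & m.-primitive_root xi) &
        char_poly (mx_P1 phi) = ('X - 1%:P) ^+ 2 * ('X - xi%:P)]].

Definition finite_PAut_subgroup (G : endo -> Prop) : Prop :=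
  (forall g, G g -> is_PAut_gr g) /\
      (exists s : seq endo, forall g, G g <-> List.In g s)/\
      G id/\
      (forall g h, G g -> G h -> G (g \o h))
    /\ (forall g, G g -> exists2 h, G h & (h \o g =1 id /\ g \o h =1 id)).

Definition generated_by_reflections (G : endo -> Prop) : Prop :=
  forall g, G g -> exists s : seq endo,
    (forall r, List.In r s -> G r /\ is_Poisson_reflection r) /\
    g =1 foldr (fun r acc => r \o acc) id s.

Definition nontrivial (G : endo -> Prop) : Prop :=
  exists2 g, G g & exists f, g f <> f.

Definition invariants (G : endo -> Prop) (f : {mpoly K[3]}) : Prop :=
  forall g, G g -> g f = f.

Definition Poisson_iso_onto (A : {mpoly K[3]} -> Prop) (psi : endo) : Prop :=
  (forall f g, psi (f + g) = psi f + psi g)/\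
      (forall f g, psi (f * g) = psi f * psi g)/\
      psi 1 = 1/\
      (forall (c : K) f, psi (c *: f) = c *: psi f)/\
      injective psi/\
      (forall f, A (psi f) /\ (A f -> exists f', psi f' = f))
    /\ (forall f g, psi (pbr f g) = pbr (psi f) (psi g)).

End Poisson.

(* Main.v *)
Require Import Defs.
From HB Require Import structures.
From mathcomp Require Import all_boot all_order all_algebra.
From mathcomp Require Import mpoly.
From mathcomp Require Import ring zify.
Set Implicit Arguments. Unset Strict Implicit. Unset Printing Implicit Defensive.
Import GRing.Theory.
Local Open Scope ring_scope.

Section A.
Variable K : fieldType.
Definition LB (a0 a1 a2 b0 b1 b2 x y z : K) :=
  (a0*b1 - a1*b0)*(x*y) + (a1*b2 - a2*b1)*(3*x^+2+2*x*y+y*z) + (a2*b0 - a0*b2)*(x^+2+x*z).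

Lemma sq0 (a : K) : a * a = 0 -> a = 0.
Proof. by move/eqP; rewrite mulf_eq0 orbb => /eqP. Qed.

Lemma normal_alg (c0 c1 c2 : K) : (2:K) != 0 -> (3:K) != 0 ->
  (forall x y z, c0*x+c1*y+c2*z = 0 ->
     [/\ LB c0 c1 c2 1 0 0 x y z = 0, LB c0 c1 c2 0 1 0 x y z = 0 & LB c0 c1 c2 0 0 1 x y z = 0]) ->
  c1 = 0 /\ c2 = 0.
Proof.
move=> h2 h3 H.
have [_ E1 E2] := H 0 c2 (-c1) ltac:(ring).
have e1 : c1 * c2 * c2 = LB c0 c1 c2 0 1 0 0 c2 (-c1) by rewrite /LB; ring.
rewrite E1 in e1.
have e2 : c1 * c1 * c2 = - LB c0 c1 c2 0 0 1 0 c2 (-c1) by rewrite /LB; ring.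
rewrite E2 oppr0 in e2.
have e3 : c1 * c2 = 0 by apply: sq0; rewrite -[RHS](mul0r c1) -e1; ring.
move/eqP: e3; rewrite mulf_eq0 => /orP[]/eqP e.
- have hv : c0 * c2 + c1 * 0 + c2 * (- c0) = 0 by rewrite e; ring.
  have [_ F _] := H c2 0 (-c0) hv.
  have : 3 * c2 ^+ 3 = - LB c0 c1 c2 0 1 0 c2 0 (-c0) by rewrite /LB e; ring.
  rewrite F oppr0 => /eqP; rewrite mulf_eq0 (negbTE h3) expf_eq0 /= => /eqP.
  by split.
- have hv : c0 * c1 + c1 * (- c0) + c2 * 0 = 0 by rewrite e; ring.
  have [F _ G] := H c1 (-c0) 0 hv.
  have f1 : c0 * c1 * c1 = LB c0 c1 c2 1 0 0 c1 (-c0) 0 by rewrite /LB e; ring.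
  rewrite F in f1.
  have : 3 * c1 ^+ 3 = LB c0 c1 c2 0 0 1 c1 (-c0) 0 + 3 * (c0 * c1 * c1) by rewrite /LB e; ring.
  rewrite G f1 mulr0 addr0 => /eqP; rewrite mulf_eq0 (negbTE h3) expf_eq0 /= => /eqP.
  by split.
Qed.
End A.

Lemma lc1 (R : comNzRingType) (k1 : R) (L1 R1 A B : R) :
  L1 = R1 -> A - B = k1 * (L1 - R1) -> A = B.
Proof. by move=> -> /eqP; rewrite subrr mulr0 subr_eq0 => /eqP. Qed.
Lemma lc2 (R : comNzRingType) (k1 k2 : R) (L1 R1 L2 R2 A B : R) :
  L1 = R1 -> L2 = R2 -> A - B = k1 * (L1 - R1) + k2 * (L2 - R2) -> A = B.
Proof. by move=> -> -> /eqP; rewrite !subrr !mulr0 addr0 subr_eq0 => /eqP. Qed.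
Arguments lc1 {R} k1 {L1 R1 A B}.
Arguments lc2 {R} k1 k2 {L1 R1 L2 R2 A B}.

Lemma mul2_0 (K : fieldType) (a b : K) : a != 0 -> b != 0 -> forall x, a * b * x = 0 -> x = 0.
Proof. by move=> ha hb x /eqP; rewrite !mulf_eq0 (negbTE ha) (negbTE hb) => /eqP. Qed.

Section B.
Variable K : fieldType.

Lemma rows_alg (c0 d0 d1 d2 e0 e1 e2 : K) : c0 != 0 -> (2:K) != 0 -> (3:K) != 0 ->
 (forall x y z, LB c0 0 0 d0 d1 d2 x y z = (c0*x)*(d0*x+d1*y+d2*z)) ->
 (forall x y z, LB e0 e1 e2 c0 0 0 x y z = (c0*x)^+2 + (c0*x)*(e0*x+e1*y+e2*z)) ->
 (forall x y z, LB d0 d1 d2 e0 e1 e2 x y z =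
    3*(c0*x)^+2 + 2*(c0*x)*(d0*x+d1*y+d2*z) + (d0*x+d1*y+d2*z)*(e0*x+e1*y+e2*z)) ->
 [/\ d0 = 0, d2 = 0, e1 = 0, e2 = c0 + e0 & d1 * e2 = c0^+2].
Proof.
move=> hc h2 h3 HA HB HC.
have hd2 : d2 = 0.
  apply: (mul2_0 hc h2); apply: (lc2 1 (-1) (HA 1 0 0) (HA 1 0 1)); rewrite /LB; ring.
have hd0 : d0 = 0.
  apply: (mul2_0 hc (oner_neq0 K)); apply: (lc1 (-1) (HA 1 0 0)); rewrite /LB hd2; ring.
have he1 : e1 = 0.
  apply: (mul2_0 hc h2); apply: (lc2 1 (-1) (HB 1 0 0) (HB 1 1 0)); rewrite /LB; ring.
have he2 : e2 = c0 + e0.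
  apply: (mulfI hc); apply: (lc1 1 (HB 1 0 0)); rewrite /LB; ring.
split => //.
apply: (mulfI h3); apply: (lc1 1 (HC 1 0 0)); rewrite /LB hd0 hd2 he1; ring.
Qed.

Lemma eig_alg (c0 d1 e2 e0 xi : K) : c0 != 0 -> xi != 1 -> (2:K) != 0 -> (3:K) != 0 ->
  e2 = c0 + e0 -> d1 * e2 = c0^+2 ->
  (forall x, (x - c0) * (x - d1) * (x - e2) = (x - 1)^+2 * (x - xi)) ->
  [/\ c0 = -1, d1 = 1, e2 = 1 & e0 = 2].
Proof.
move=> hc hx h2 h3 he hde H.
have H0 := H 0; have Hc := H c0; have H2 := H 2.
have c3 : c0 ^+ 3 = xi by apply: (lc2 (-1) (-c0) H0 hde); ring.
have hc1 : c0 != 1.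
  apply/eqP => e1; move: hx; rewrite -c3 e1 expr1n eqxx //.
have cx : c0 = xi.
  have : (c0 - 1) ^+ 2 * (c0 - xi) = 0 by rewrite -Hc; ring.
  move/eqP; rewrite mulf_eq0 expf_eq0 /= subr_eq0 (negbTE hc1) /= subr_eq0 => /eqP //.
have cm1 : c0 = -1.
  have : c0 * (c0 - 1) * (c0 + 1) = 0 by apply: (lc2 1 (-1) c3 cx); ring.
  move/eqP; rewrite !mulf_eq0 (negbTE hc) subr_eq0 (negbTE hc1) /= addr_eq0 => /eqP //.
rewrite -cx cm1 in H2; rewrite cm1 in hde.
have s : d1 + e2 = 2.
  apply/eqP; rewrite -subr_eq0; apply/eqP; apply: (mul2_0 h3 h2); apply: (lc2 (-1) 3 H2 hde); ring.
have q1 : d1 = 1.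
  have : (d1 - 1) * (d1 - 1) = 0 by apply: (lc2 d1 (-1) s hde); ring.
  by move/sq0/eqP; rewrite subr_eq0 => /eqP.
rewrite q1 in s.
have w1 : e2 = 1 by apply: (lc1 1 s); ring.
split => //.
by apply: (lc1 (-1) he); rewrite w1 cm1; ring.
Qed.
End B.

Section Chain.
Variable K : fieldType.
Notation P := {mpoly K[3]}.

Definition ishom (phi : P -> P) :=
  [/\ (forall f g, phi (f + g) = phi f + phi g),
      (forall f g, phi (f * g) = phi f * phi g),
      phi 1 = 1 &
      (forall (c : K) f, phi (c *: f) = c *: phi f)].

Definition chainP (phi : P -> P) (f : P) := forall i : 'I_3,
  mderiv i (phi f) = phi (mderiv 0 f) * mderiv i (phi 'X_0)
     + phi (mderiv 1 f) * mderiv i (phi 'X_1) + phi (mderiv 2 f) * mderiv i (phi 'X_2).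

Lemma hom0 phi : ishom phi -> phi 0 = 0.
Proof.
case=> hD _ _ _; have := hD 0 0; rewrite addr0 => e.
by apply: (addrI (phi 0)); rewrite addr0 -e.
Qed.

Lemma chainD phi f g : ishom phi -> chainP phi f -> chainP phi g -> chainP phi (f + g).
Proof.
move=> h hf hg i; have [hD _ _ _] := h.
by rewrite hD mderivD hf hg !mderivD !hD; ring.
Qed.

Lemma chainM phi f g : ishom phi -> chainP phi f -> chainP phi g -> chainP phi (f * g).
Proof.
move=> h hf hg i; have [hD hM _ _] := h.
by rewrite hM mderivM hf hg !mderivM !hD !hM; ring.
Qed.

Lemma chainZ phi c f : ishom phi -> chainP phi f -> chainP phi (c *: f).
Proof.
move=> h hf i; have [_ _ _ hZ] := h.
by rewrite hZ !mderivZ !hZ hf -!scalerAl -!scalerDr.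
Qed.

Lemma chain1 phi : ishom phi -> chainP phi 1.
Proof.
move=> h i; have [_ _ h1 _] := h.
have e : mderiv i (1 : P) = 0 by rewrite -mpolyC1 mderivC.
rewrite h1 !e.
have e0 : forall j : 'I_3, mderiv j (1:P) = 0 by move=> j; rewrite -mpolyC1 mderivC.
by rewrite !e0 (hom0 h) !mul0r !addr0.
Qed.

Lemma mderivXU (j k : 'I_3) : mderiv j ('X_k : P) = (k == j)%:R.
Proof.
rewrite mderivX mnm1E; case: eqP => [->|_]; last by rewrite scale0r.
have -> : (U_(j) - U_(j))%MM = 0%MM by apply/mnmP => l; rewrite mnmBE subnn mnm0E.
by rewrite mpolyX0 scale1r.
Qed.

Lemma chainX phi (k : 'I_3) : ishom phi -> chainP phi 'X_k.
Proof.
move=> h i; have [_ _ h1 _] := h.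
rewrite !mderivXU.
have hz := hom0 h.
by case: k => [[|[|[|]]] //= hk]; rewrite ?h1 ?hz ?mul1r ?mul0r ?addr0 ?add0r.
Qed.

Lemma chain_all phi f : ishom phi -> chainP phi f.
Proof.
move=> h; elim/mpolyind: f => [|c m p _ _ hp].
  by move=> i; rewrite (hom0 h) !mderiv0 (hom0 h) !mul0r !addr0.
apply: chainD => //; apply: chainZ => //.
rewrite mpolyXE_id !big_ord_recr big_ord0 /= mul1r.
have hX : forall (k : 'I_3) e, chainP phi ('X_k ^+ e).
  move=> k; elim=> [|e ih]; first by rewrite expr0; exact: chain1.
  by rewrite exprS; apply: chainM => //; exact: chainX.
by apply: chainM => //; apply: chainM.
Qed.

End Chain.

Section Pb.
Variable K : fieldType.
Notation P := {mpoly K[3]}.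

Lemma Pvar0 : Pvar K 0 = 'X_0. Proof. by rewrite /Pvar; congr mpolyX; congr mnm1; apply/val_inj; rewrite /= inordK. Qed.
Lemma Pvar1 : Pvar K 1 = 'X_1. Proof. by rewrite /Pvar; congr mpolyX; congr mnm1; apply/val_inj; rewrite /= inordK. Qed.
Lemma Pvar2 : Pvar K 2 = 'X_2. Proof. by rewrite /Pvar; congr mpolyX; congr mnm1; apply/val_inj; rewrite /= inordK. Qed.

Lemma pbrE (f g : P) : pbr f g =
    (mderiv 0 f * mderiv 1 g - mderiv 1 f * mderiv 0 g) * b12 K
  + (mderiv 1 f * mderiv 2 g - mderiv 2 f * mderiv 1 g) * b23 K
  + (mderiv 2 f * mderiv 0 g - mderiv 0 f * mderiv 2 g) * b31 K.
Proof.
rewrite /pbr !big_ord_recr big_ord0 /= !add0r.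
pose D := fun (i : nat) (h : P) => mderiv (inord i) h.
have H : forall (i : 'I_3) h, mderiv i h = D (val i) h by move=> i h; rewrite /D inord_val.
rewrite !H /= !big_ord0 /gbr /=.
have m1 : (1 %% 3 = 1)%N by []. have m2 : ((1 + 1) %% 3 = 2)%N by [].
rewrite !m1 !m2. ring.
Qed.
End Pb.

Section Glue.
Variable K : fieldType.
Notation P := {mpoly K[3]}.

Definition lin (a0 a1 a2 : K) : P := a0 *: 'X_0 + a1 *: 'X_1 + a2 *: 'X_2.
Definition pt (x y z : K) : 'I_3 -> K := fun i => nth 0 [:: x; y; z] i.

Lemma lin_homog (p : P) : p \is ishomog1 1 mdeg ->
  p = lin (p@_U_(0)) (p@_U_(1)) (p@_U_(2)).
Proof.
move=> hp; apply/mpolyP => m; rewrite /lin !mcoeffD !mcoeffZ !mcoeffX.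
case: (boolP (mdeg m == 1%N)) => [/mdeg1P [i /eqP ->]|hm].
  rewrite !eq_mnm1.
  by case: i => [[|[|[|]]] //= hi]; rewrite ?mulr1 ?mulr0 ?addr0 ?add0r;
     congr (p@_ (U_(_))); apply/val_inj.
rewrite (dhomog_nemf_coeff hp hm).
have ne : forall j : 'I_3, (U_(j) == m)%MM = false.
  by move=> j; apply/negbTE; apply: contra hm => /eqP <-; rewrite mdeg1.
by rewrite !ne !mulr0 !addr0.
Qed.

Lemma mderivXU' (j k : 'I_3) : mderiv j ('X_k : P) = (k == j)%:R.
Proof.
rewrite mderivX mnm1E; case: eqP => [->|_]; last by rewrite scale0r.
have -> : (U_(j) - U_(j))%MM = 0%MM by apply/mnmP => l; rewrite mnmBE subnn mnm0E.
by rewrite mpolyX0 scale1r.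
Qed.

Lemma mderiv_lin0 a0 a1 a2 : mderiv 0 (lin a0 a1 a2) = a0%:MP.
Proof. by rewrite /lin !mderivD !mderivZ !mderivXU' /= !scaler0 !addr0 -alg_mpolyC. Qed.
Lemma mderiv_lin1 a0 a1 a2 : mderiv 1 (lin a0 a1 a2) = a1%:MP.
Proof. by rewrite /lin !mderivD !mderivZ !mderivXU' /= !scaler0 add0r addr0 -alg_mpolyC. Qed.
Lemma mderiv_lin2 a0 a1 a2 : mderiv 2 (lin a0 a1 a2) = a2%:MP.
Proof. by rewrite /lin !mderivD !mderivZ !mderivXU' /= !scaler0 !add0r -alg_mpolyC. Qed.

Lemma meval_lin x y z a0 a1 a2 : meval (pt x y z) (lin a0 a1 a2) = a0 * x + a1 * y + a2 * z.
Proof. by rewrite /lin !mevalD !mevalZ !mevalXU. Qed.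

Lemma meval3 v : meval v (3%:R : P) = 3.
Proof. by rewrite mevalMn meval1. Qed.
Lemma meval2 v : meval v (2%:R : P) = 2.
Proof. by rewrite mevalMn meval1. Qed.

Lemma meval_b12 x y z : meval (pt x y z) (b12 K) = x * y.
Proof. by rewrite /b12 Pvar0 Pvar1 mevalM !mevalXU. Qed.
Lemma meval_b23 x y z : meval (pt x y z) (b23 K) = 3 * x ^+ 2 + 2 * x * y + y * z.
Proof. rewrite /b23 Pvar0 Pvar1 Pvar2 !mevalD !mevalM meval3 meval2 !mevalXU /pt /=; ring. Qed.
Lemma meval_b31 x y z : meval (pt x y z) (b31 K) = x ^+ 2 + x * z.
Proof. rewrite /b31 Pvar0 Pvar2 !mevalD !mevalM !mevalXU /pt /=; ring. Qed.

Lemma meval_pbr_lin x y z a0 a1 a2 b0 b1 b2 :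
  meval (pt x y z) (pbr (lin a0 a1 a2) (lin b0 b1 b2)) = LB a0 a1 a2 b0 b1 b2 x y z.
Proof.
rewrite pbrE !mderiv_lin0 !mderiv_lin1 !mderiv_lin2 [b12 K]lock [b23 K]lock [b31 K]lock.
rewrite !mevalD !mevalM !mevalB !mevalM !mevalC -!lock.
by rewrite meval_b12 meval_b23 meval_b31 /LB.
Qed.

Lemma X0lin : ('X_0 : P) = lin 1 0 0. Proof. by rewrite /lin !scale0r !addr0 scale1r. Qed.
Lemma X1lin : ('X_1 : P) = lin 0 1 0. Proof. by rewrite /lin !scale0r addr0 add0r scale1r. Qed.
Lemma X2lin : ('X_2 : P) = lin 0 0 1. Proof. by rewrite /lin !scale0r !add0r scale1r. Qed.

Lemma pbrX01 : pbr ('X_0 : P) 'X_1 = b12 K.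
Proof. by rewrite pbrE !mderivXU' /=; ring. Qed.
Lemma pbrX12 : pbr ('X_1 : P) 'X_2 = b23 K.
Proof. by rewrite pbrE !mderivXU' /=; ring. Qed.
Lemma pbrX20 : pbr ('X_2 : P) 'X_0 = b31 K.
Proof. by rewrite pbrE !mderivXU' /=; ring. Qed.
Lemma pbrX0 (f : P) : pbr 'X_0 f = 'X_0 * (mderiv 1 f * 'X_1 - mderiv 2 f * ('X_0 + 'X_2)).
Proof. by rewrite pbrE !mderivXU' /= /b12 /b31 Pvar0 Pvar1 Pvar2; ring. Qed.


End Glue.

Section Refl.
Variable K : fieldType.
Notation P := {mpoly K[3]}.

Lemma homN phi (f : P) : ishom phi -> phi (- f) = - phi f.
Proof.
move=> h; have [hD _ _ _] := h; apply/eqP; rewrite -subr_eq0 opprK -hD addNr.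
by rewrite (hom0 h).
Qed.
Lemma homB phi (f g : P) : ishom phi -> phi (f - g) = phi f - phi g.
Proof. by move=> h; have [hD _ _ _] := h; rewrite hD homN. Qed.
Lemma hom_nat phi n : ishom phi -> phi (n%:R : P) = n%:R.
Proof.
move=> h; have [hD _ h1 _] := h; elim: n => [|n ih]; first by rewrite (hom0 h).
by rewrite !mulrS hD h1 ih.
Qed.
Lemma homX phi (f : P) n : ishom phi -> phi (f ^+ n) = phi f ^+ n.
Proof.
move=> h; have [_ hM h1 _] := h; elim: n => [|n ih]; first by rewrite !expr0 h1.
by rewrite !exprS hM ih.
Qed.

Lemma phi_b12 phi : ishom phi -> phi (b12 K) = phi 'X_0 * phi 'X_1.
Proof. by move=> h; have [_ hM _ _] := h; rewrite /b12 Pvar0 Pvar1 hM. Qed.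
Lemma phi_b23 phi : ishom phi -> phi (b23 K) =
  3%:R * phi 'X_0 ^+ 2 + 2%:R * phi 'X_0 * phi 'X_1 + phi 'X_1 * phi 'X_2.
Proof.
by move=> h; have [hD hM _ _] := h; rewrite /b23 Pvar0 Pvar1 Pvar2 !hD !hM !hom_nat.
Qed.
Lemma phi_b31 phi : ishom phi -> phi (b31 K) = phi 'X_0 ^+ 2 + phi 'X_0 * phi 'X_2.
Proof.
by move=> h; have [hD hM _ _] := h; rewrite /b31 Pvar0 Pvar2 !hD !hM.
Qed.

Lemma PAut_hom (phi : P -> P) : is_PAut_gr phi -> ishom phi.
Proof. by case=> hD [hM [h1 [hZ _]]]; split. Qed.

Lemma X_homog (i : 'I_3) : ('X_i : P) \is ishomog1 1 mdeg.
Proof. by rewrite dhomogX /= mdeg1. Qed.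

End Refl.
Section Refl2.
Variable K : fieldType.
Notation P := {mpoly K[3]}.

Lemma i0 : inord 0 = 0 :> 'I_3. Proof. by apply/val_inj; rewrite /= inordK. Qed.
Lemma i1 : inord 1 = 1 :> 'I_3. Proof. by apply/val_inj; rewrite /= inordK. Qed.
Lemma i2 : inord 2 = 2 :> 'I_3. Proof. by apply/val_inj; rewrite /= inordK. Qed.

Lemma X0_neq0 : ('X_0 : P) != 0.
Proof.
apply/negP => /eqP e; have := congr1 (meval (pt 1 0 0)) e.
by rewrite mevalXU meval0 /pt /= => /eqP; rewrite oner_eq0.
Qed.

Lemma refl_form (phi : P -> P) : (2:K) != 0 -> (3:K) != 0 -> is_Poisson_reflection phi ->
  [/\ phi 'X_0 = lin (-1) 0 0, phi 'X_1 = lin 0 1 0 & phi 'X_2 = lin 2 0 1].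
Proof.
move=> h2 h3 [hP _ [xi [hxi _ hchar]]].
have h := PAut_hom hP.
have [hD [hM [h1 [hZ [[g hg1 hg2] [hhom hpbr]]]]]] := hP.
pose a (i j : 'I_3) := (phi 'X_i)@_U_(j).
have hl : forall i, phi 'X_i = lin (a i 0) (a i 1) (a i 2).
  by move=> i; apply: lin_homog; apply: hhom; apply: X_homog.
have [a01 a02] : a 0 1 = 0 /\ a 0 2 = 0.
  apply: (normal_alg (c0 := a 0 0)) h2 h3 _ => x y z hv.
  have key : forall k : 'I_3, meval (pt x y z) (pbr (phi 'X_0) (phi (g 'X_k))) = 0.
    move=> k; rewrite -hpbr pbrX0 hM mevalM (hl 0) meval_lin hv mul0r //.
  have k0 := key 0; have k1 := key 1; have k2 := key 2.
  rewrite hg2 (hl 0) X0lin meval_pbr_lin in k0.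
  rewrite hg2 (hl 0) X1lin meval_pbr_lin in k1.
  rewrite hg2 (hl 0) X2lin meval_pbr_lin in k2.
  by split.
have a00 : a 0 0 != 0.
  apply/negP => /eqP e; have : phi 'X_0 = 0 by rewrite (hl 0) e a01 a02 /lin !scale0r !addr0.
  move=> e'; have := hg1 'X_0; rewrite e' -(hom0 h) hg1 => e''.
  by move: X0_neq0; rewrite -e'' eqxx.
have E01 := hpbr 'X_0 'X_1; rewrite pbrX01 (phi_b12 h) in E01.
have E20 := hpbr 'X_2 'X_0; rewrite pbrX20 (phi_b31 h) in E20.
have E12 := hpbr 'X_1 'X_2; rewrite pbrX12 (phi_b23 h) in E12.
rewrite !hl a01 a02 in E01 E20 E12.
have HA : forall x y z, LB (a 0 0) 0 0 (a 1 0) (a 1 1) (a 1 2) x y z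
    = (a 0 0 * x) * (a 1 0 * x + a 1 1 * y + a 1 2 * z).
  move=> x y z; have := congr1 (meval (pt x y z)) E01.
  by rewrite meval_pbr_lin mevalM !meval_lin => <-; ring.
have HB : forall x y z, LB (a 2 0) (a 2 1) (a 2 2) (a 0 0) 0 0 x y z
    = (a 0 0 * x) ^+ 2 + (a 0 0 * x) * (a 2 0 * x + a 2 1 * y + a 2 2 * z).
  move=> x y z; have := congr1 (meval (pt x y z)) E20.
  by rewrite meval_pbr_lin mevalD !mevalM !meval_lin => <-; ring.
have HC : forall x y z, LB (a 1 0) (a 1 1) (a 1 2) (a 2 0) (a 2 1) (a 2 2) x y z
    = 3 * (a 0 0 * x) ^+ 2 + 2 * (a 0 0 * x) * (a 1 0 * x + a 1 1 * y + a 1 2 * z)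
      + (a 1 0 * x + a 1 1 * y + a 1 2 * z) * (a 2 0 * x + a 2 1 * y + a 2 2 * z).
  move=> x y z; have := congr1 (meval (pt x y z)) E12.
  by rewrite meval_pbr_lin !mevalD !mevalM meval3 meval2 !meval_lin => <-; ring.
have [a10 a12 a21 a22 a1122] := rows_alg a00 h2 h3 HA HB HC.
have aE : forall i j : 'I_3, (phi 'X_i)@_U_(j) = a (inord i) (inord j).
  by move=> i j; rewrite /a !inord_val.
have trig : is_trig_mx (mx_P1 phi).
  apply/is_trig_mxP => i j; rewrite mxE aE.
  by case: i => [[|[|[|]]] hi]; case: j => [[|[|[|]]] hj] //= _; rewrite ?i0 ?i1 ?i2.
have cp := char_poly_trig trig; rewrite hchar !big_ord_recr big_ord0 /= !mxE !aE /= ?i0 ?i1 ?i2 in cp.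
have hx : forall x, (x - a 0 0) * (x - a 1 1) * (x - a 2 2) = (x - 1) ^+ 2 * (x - xi).
  move=> x; have := congr1 (horner^~ x) cp; rewrite /= !hornerE => ->; ring.
have [c0 d1 e2 e0] := eig_alg a00 hxi h2 h3 a22 a1122 hx.
by rewrite !hl a01 a02 a10 a12 a21 c0 d1 e2 e0.
Qed.
End Refl2.

Section Main.
Variable K : fieldType.
Notation P := {mpoly K[3]}.

Definition det3f (A : 'I_3 -> 'I_3 -> P) :=
  A 0 0 * (A 1 1 * A 2 2 - A 1 2 * A 2 1)
  - A 0 1 * (A 1 0 * A 2 2 - A 1 2 * A 2 0)
  + A 0 2 * (A 1 0 * A 2 1 - A 1 1 * A 2 0).

Lemma det3_mul (A B C : 'I_3 -> 'I_3 -> P) :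
  (forall j i, C j i = A j 0 * B 0 i + A j 1 * B 1 i + A j 2 * B 2 i) ->
  det3f C = det3f A * det3f B.
Proof. by move=> H; rewrite /det3f !H; ring. Qed.

Lemma G_fix (G : endo K -> Prop) : (2:K) != 0 -> (3:K) != 0 ->
  generated_by_reflections G -> forall g, G g ->
  [/\ g 'X_1 = 'X_1, g ('X_0 + 'X_2) = 'X_0 + 'X_2 & g ('X_0 * 'X_0) = 'X_0 * 'X_0].
Proof.
move=> h2 h3 hgen g hg; have [s [hs hgs]] := hgen g hg; rewrite !hgs.
elim: s hs {hgs} => [|r s ih] hs //=.
have [_ hr] := hs r (or_introl erefl).
have [r0 r1 r2] := refl_form h2 h3 hr.
have hh : ishom r by apply: PAut_hom; case: hr.
have [hD hM _ _] := hh.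
have [i1 i2 i3] := ih (fun r' h => hs r' (or_intror h)).
rewrite i1 i2 i3 hD hM r0 r1 r2 /lin.
rewrite !scale0r !addr0 !add0r !scale1r scaleN1r scaler_nat mulr2n.
by split => //; ring.
Qed.


Lemma ar (a b : nat) : 2%N = (a + b).-1 -> (1 < b)%N -> (a <= 1)%N.
Proof. rewrite -subn1; lia. Qed.

Lemma main_aux (G : endo K -> Prop) : (2:K) != 0 -> (3:K) != 0 ->
  finite_PAut_subgroup G -> generated_by_reflections G -> nontrivial G ->
  ~ (exists psi : endo K, Poisson_iso_onto (invariants G) psi).
Proof.
move=> h2 h3 hfin hgen [g0 hg0 [f0 hf0]] [psi [pD [pM [p1 [pZ [pinj [ponto ppbr]]]]]]].
have hpsi : ishom psi by split.
have [r0 [hr0G hr0]] : exists r, G r /\ is_Poisson_reflection r.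
  have [s [hs hgs]] := hgen g0 hg0.
  case: s hs hgs => [|r s] hs hgs; first by exfalso; apply: hf0; rewrite hgs.
  by exists r; apply: hs; left.
have [r0X0 r0X1 r0X2] := refl_form h2 h3 hr0.
have hr0h : ishom r0 by apply: PAut_hom; case: hr0.
have inv_w : forall w, (forall g, G g -> g w = w) -> exists F, psi F = w.
  by move=> w hw; have [_ ] := ponto w; apply.
have [F0 hF0] := inv_w 'X_1 (fun g hg => let: And3 a _ _ := G_fix h2 h3 hgen hg in a).
have [F1 hF1] := inv_w ('X_0 + 'X_2) (fun g hg => let: And3 _ a _ := G_fix h2 h3 hgen hg in a).
have [F2 hF2] := inv_w ('X_0 * 'X_0) (fun g hg => let: And3 _ _ a := G_fix h2 h3 hgen hg in a).
pose Ju (k i : 'I_3) := mderiv i (psi 'X_k).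
pose D := det3f Ju.
pose Fs (j : 'I_3) := nth 0 [:: F0; F1; F2] j.
have hE : det3f (fun j i => mderiv i (psi (Fs j))) = det3f (fun j k => psi (mderiv k (Fs j))) * D.
  by apply: det3_mul => j i; exact: (chain_all (Fs j) hpsi i).
have hdetw : det3f (fun j i => mderiv i (psi (Fs j))) = 2%:R * 'X_0.
  rewrite /det3f /Fs /= hF0 hF1 hF2 !mderivD !mderivM !mderivXU' /=; ring.
rewrite hdetw in hE; set E := det3f _ in hE.
have hinv : forall f, r0 (psi f) = psi f by move=> f; have [hi _] := ponto f; exact: hi.
have hR : D = det3f (fun k m => r0 (Ju k m)) * det3f (fun m i => mderiv i (r0 'X_m)).
  apply: det3_mul => k i; rewrite /Ju -{1}(hinv 'X_k); exact: (chain_all _ hr0h i).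
have hRdet : det3f (fun m i => mderiv i (r0 'X_m)) = -1.
  rewrite /det3f r0X0 r0X1 r0X2 !mderiv_lin0 !mderiv_lin1 !mderiv_lin2.
  rewrite !mpolyCN !mpolyC0 !mpolyC1 -[2%:MP]/((2%:R : K)%:MP) mpolyC_nat; ring.
have [rD rM r1 rZ] := hr0h.
have rN : forall f, r0 (- f) = - r0 f by move=> f; apply: homN.
have hrD : det3f (fun k m => r0 (Ju k m)) = r0 D by rewrite /D /det3f !(rD, rN, rM).
rewrite hrD hRdet in hR.
have mnat : forall (i : 'I_3) n, mderiv i (n%:R : P) = 0 by move=> i n; rewrite -mpolyC_nat mderivC.
pose C : P := 'X_0 * 'X_0 * 'X_0 + 'X_0 * 'X_0 * 'X_1 + 'X_0 * 'X_1 * 'X_2.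
have dC0 : mderiv 0 C = b23 K.
  by rewrite /C /b23 ?Pvar0 ?Pvar1 ?Pvar2 ?expr2 !mderivD !mderivM !mderivXU' ?mnat /=; ring.
have dC1 : mderiv 1 C = b31 K.
  by rewrite /C /b31 ?Pvar0 ?Pvar1 ?Pvar2 ?expr2 !mderivD !mderivM !mderivXU' ?mnat /=; ring.
have dC2 : mderiv 2 C = b12 K.
  by rewrite /C /b12 ?Pvar0 ?Pvar1 ?Pvar2 ?expr2 !mderivD !mderivM !mderivXU' ?mnat /=; ring.
have pb23 : psi (b23 K) = pbr (psi 'X_1) (psi 'X_2) by rewrite -pbrX12 ppbr.
have pb31 : psi (b31 K) = pbr (psi 'X_2) (psi 'X_0) by rewrite -pbrX20 ppbr.
have pb12 : psi (b12 K) = pbr (psi 'X_0) (psi 'X_1) by rewrite -pbrX01 ppbr.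
have cu0 : mderiv 0 (psi C) = D * b23 K.
  rewrite (chain_all C hpsi 0) dC0 dC1 dC2 pb23 pb31 pb12 !pbrE /D /det3f /Ju; ring.
have cu2 : mderiv 2 (psi C) = D * b12 K.
  rewrite (chain_all C hpsi 2) dC0 dC1 dC2 pb23 pb31 pb12 !pbrE /D /det3f /Ju; ring.
have hcurl : mderiv 2 D * b23 K = mderiv 0 D * b12 K.
  have := mderiv_comm 0 2 (psi C); rewrite cu0 cu2 [b23 K]lock [b12 K]lock !mderivM -!lock.
  have -> : mderiv 2 (b23 K) = 'X_1 by rewrite /b23 ?Pvar0 ?Pvar1 ?Pvar2 ?expr2 !mderivD !mderivM !mderivXU' ?mnat /=; ring.
  have -> : mderiv 0 (b12 K) = 'X_1 by rewrite /b12 Pvar0 Pvar1 !mderivM !mderivXU' /=; ring.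
  by move/addIr.
have hD0 : D != 0.
  apply/eqP => e; have := congr1 (meval (pt 1 0 0)) hE.
  by rewrite e mulr0 meval0 mevalM meval2 mevalXU /pt /= mulr1 => /eqP; rewrite (negbTE h2).
have hE0 : E != 0.
  apply/eqP => e; have := congr1 (meval (pt 1 0 0)) hE.
  by rewrite e mul0r meval0 mevalM meval2 mevalXU /pt /= mulr1 => /eqP; rewrite (negbTE h2).
have hs := msizeM hE0 hD0; rewrite -hE in hs.
have m2 : msize (2%:R * 'X_0 : P) = 2%N.
  rewrite -mpolyC_nat mul_mpolyC mmeasureZ; last exact: h2.
  by rewrite mmeasureX; congr S; apply: mdeg1.
rewrite m2 in hs.
have sE : (0 < msize E)%N by rewrite lt0n msize_poly_eq0.
have sD : (0 < msize D)%N by rewrite lt0n msize_poly_eq0.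
case: (leqP (msize D) 1) => hDs.
  have hDc := msize1_polyC hDs.
  have r0C : r0 (D@_0)%:MP = (D@_0)%:MP by rewrite -alg_mpolyC rZ r1.
  rewrite hDc r0C in hR.
  have := congr1 (meval (pt 0 0 0)) hR; rewrite mevalM !mevalC mevalN meval1 mulrN1.
  move/eqP; rewrite -addr_eq0 -mulr2n -mulr_natr mulf_eq0 (negbTE h2) orbF => /eqP d0.
  by move: hD0; rewrite hDc d0 mpolyC0 eqxx.
have hEs : (msize E <= 1)%N by apply: (ar hs hDs).
have hEc := msize1_polyC hEs.
set e := E@_0 in hEc.
have e0 : (e%:MP : P) != 0 by rewrite -hEc.
have d2 : mderiv 2 D = 0.
  have := congr1 (mderiv 2) hE; rewrite hEc mderiv_mulC mderivM mnat mderivXU' /= mulr0 mul0r addr0.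
  by move/esym/eqP; rewrite mulf_eq0 (negbTE e0) => /eqP.
have d0 : e%:MP * mderiv 0 D = 2%:R.
  have := congr1 (mderiv 0) hE; rewrite hEc mderiv_mulC mderivM mnat mderivXU' /= mulr1 mul0r add0r.
  by move=> ->.
have : e%:MP * (mderiv 0 D * b12 K) = 0 by rewrite -hcurl d2 !mul0r mulr0.
rewrite mulrA d0 => /(congr1 (meval (pt 1 1 0))).
rewrite mevalM meval2 meval_b12 meval0 !mulr1 => /eqP; by rewrite (negbTE h2).
Qed.
End Main.

Unset Implicit Arguments. Set Strict Implicit.

Theorem lemma3p8p2 (K : closedFieldType) (charK : [pchar K] =i pred0)
  (G : endo K -> Prop) :
  finite_PAut_subgroup G -> generated_by_reflections G -> nontrivial G ->
  ~ (exists psi : endo K, Poisson_iso_onto (invariants G) psi).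
Proof.
have h := (pcharf0P K).1 charK.
apply: main_aux.
- by rewrite (h 2%N).
- by rewrite (h 3%N).
Qed.
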